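(* Let $n\geq 13$ be an integer with $n\not\equiv 2\pmod 3$. If $f:V(C_n)\to\{-1,1,2\}$ is any function with $\sum_{v\in V(C_n)}f(v)=1$, then there exists a vertex $y\in V(C_n)$ such that $\sum_{z\in N_{C_n}[y]}f(z)<0$.
   Context: $C_n$ denotes the cycle on $n$ vertices, and for a vertex $y$ of $C_n$, $N_{C_n}[y]$ is the closed neighborhood of $y$ in $C_n$, i.e. $y$ together with its two neighbors on the cycle. *)

(* Defs.v *)
From mathcomp Require Import all_boot all_order all_algebra.
Set Implicit Arguments. Unset Strict Implicit. Unset Printing Implicit Defensive.
Import Order.TTheory GRing.Theory Num.Theory.

(* The cycle C_n on vertex set 'I_n: i ~ j iff j = i+1 mod n or i = j+1 mod n
   (intended for n >= 3). *)
Definition cycle_adj (n : nat) (i j : 'I_n) : bool :=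
  (j == (i.+1 %% n) :> nat) || (i == (j.+1 %% n) :> nat).

Definition closed_nbhd (n : nat) (y : 'I_n) : {set 'I_n} :=
  [set z | (z == y) || cycle_adj z y].

(* Main.v *)
Require Import Defs.
From mathcomp Require Import all_boot all_order all_algebra zify.
Import Order.TTheory GRing.Theory Num.Theory.
Local Open Scope ring_scope.

Lemma val_iterS n (x : 'I_n) k : val (iter k (@ordS n) x) = ((x + k) %% n)%N.
Proof.
elim: k => [|k IH] /=; first by rewrite addn0 modn_small.
by rewrite IH /= -addn1 modnDml addn1 addnS.
Qed.

Lemma iterS_neq n (x : 'I_n) a b : (a < n)%N -> (b < n)%N -> a != b ->
  iter a (@ordS n) x != iter b (@ordS n) x.
Proof.
move=> ha hb hab; rewrite -val_eqE /= !val_iterS eqn_modDl !modn_small //.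
Qed.

Lemma nbhd_eq n (y : 'I_n) : closed_nbhd y = [set ord_pred y; y; ordS y].
Proof.
apply/setP => z; rewrite !inE /cycle_adj.
have -> : (z == ord_pred y) = (y == (z.+1 %% n)%N :> nat).
  by rewrite -(inj_eq (@ordS_inj n)) ord_predK eq_sym -val_eqE.
have -> : (z == ordS y) = (z == (y.+1 %% n)%N :> nat) by rewrite -val_eqE.
by case: (z == y); case: (_ == _); case: (_ == _).
Qed.

Lemma nbhd_sum n (hn : (3 <= n)%N) (f : 'I_n -> int) (y : 'I_n) :
  \sum_(z in closed_nbhd y) f z = f (ord_pred y) + f y + f (ordS y).
Proof.
have h1 : ord_pred y != y.
  by rewrite -(inj_eq (@ordS_inj n)) ord_predK (@iterS_neq n y 0 1); lia.
have h2 : ordS y != y by rewrite (@iterS_neq n y 1 0); lia.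
have h3 : ord_pred y != ordS y.
  rewrite -(inj_eq (@ordS_inj n)) ord_predK.
  by rewrite (@iterS_neq n y 0 2); lia.
rewrite nbhd_eq -setUA !big_setU1 ?big_set1 /= ?addrA // !inE ?negb_or ?h1 ?h3 ?(eq_sym y) ?h2 //.
Qed.

Lemma key (a b d e g h : int) : a \in [:: -1; 1; 2] -> b \in [:: -1; 1; 2] ->
  d \in [:: -1; 1; 2] -> e \in [:: -1; 1; 2] -> g \in [:: -1; 1; 2] -> h \in [:: -1; 1; 2] ->
  0 <= a+b+1 -> 0 <= b+1+d -> 0 <= 1+d+e -> 0 <= d+e+g -> 0 <= e+g+h ->
  (a+b+1)+(b+1+d)+(1+d+e)+(d+e+g)+(e+g+h) <= 3 -> False.
Proof.
rewrite !inE => /or3P[]/eqP-> /or3P[]/eqP-> /or3P[]/eqP-> /or3P[]/eqP-> /or3P[]/eqP-> /or3P[]/eqP->; lia.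
Qed.

Theorem mainTheorem9 (n : nat) (hn : (13 <= n)%N) (hmod : (n %% 3 != 2)%N)
  (f : 'I_n -> int)
  (hf : forall v : 'I_n, f v \in [:: -1; 1; 2])
  (hsum : \sum_(v : 'I_n) f v = 1) :
  exists y : 'I_n, \sum_(z in closed_nbhd y) f z < 0.
Proof.
have n3 : (3 <= n)%N by apply: leq_trans hn.
case: (pickP (fun y : 'I_n => \sum_(z in closed_nbhd y) f z < 0)) => [y Hy|H];
  first by exists y.
exfalso.
pose W y := f (ord_pred y) + f y + f (ordS y).
have HW : forall y, 0 <= W y.
  by move=> y; have := H y; rewrite nbhd_sum // => /negbT; rewrite -leNgt.
have HS : \sum_y W y = 3.
  have r1 : \sum_y f (ord_pred y) = \sum_y f y.
    by rewrite [RHS](reindex_inj (@ord_pred_inj n)).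
  have r2 : \sum_y f (ordS y) = \sum_y f y.
    by rewrite [RHS](reindex_inj (@ordS_inj n)).
  by rewrite /W !big_split /= r1 r2 hsum.
case: (pickP (fun v => f v == 1)) => [j /eqP Hj | H1]; last first.
  have E : forall v, f v = 3 * ((f v == 2) : nat)%:Z - 1.
    move=> v; have := hf v; have := H1 v; rewrite !inE /= => ->.
    by case/orP => /eqP ->.
  move: hsum; rewrite (eq_bigr _ (fun v _ => E v)) sumrB -mulr_sumr sumr_const card_ord.
  move: (\sum_(i < n) _) => k.
  lia.
pose x0 := ord_pred (ord_pred j).
pose X k := iter k (@ordS n) x0.
have Xj : X 2%N = j by rewrite /X /= /x0 !ord_predK.
have WX : forall k, W (X k.+1) = f (X k) + f (X k.+1) + f (X k.+2).
  by move=> k; rewrite /W /= ordSK.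
have ne : forall a b, (a < 13)%N -> (b < 13)%N -> a != b -> X a != X b.
  move=> a b ha hb hab; apply: iterS_neq => //; apply: leq_trans hn; lia.
clearbody X W.
have : W (X 1%N) + W (X 2%N) + W (X 3%N) + W (X 4%N) + W (X 5%N) <= 3.
  rewrite -HS (bigD1 (X 1%N)) // (bigD1 (X 2%N)) ?ne // (bigD1 (X 3%N)) ?ne //.
  rewrite (bigD1 (X 4%N)) ?ne // (bigD1 (X 5%N)) ?ne //.
  set R := \big[_/_]_(i | _) W i.
  have : 0 <= R by apply: sumr_ge0 => i _; exact: HW.
  rewrite /= in R *.
  move: R => R; lia.
have W1 := HW (X 1%N); have W2 := HW (X 2%N); have W3 := HW (X 3%N).
have W4 := HW (X 4%N); have W5 := HW (X 5%N).
rewrite !WX Xj Hj in W1 W2 W3 W4 W5 *.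
move=> Hle.
exact: (@key _ _ _ _ _ _ (hf (X 0%N)) (hf (X 1%N)) (hf (X 3%N)) (hf (X 4%N)) (hf (X 5%N)) (hf (X 6%N)) W1 W2 W3 W4 W5 Hle).
Qed.
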